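(* Let $K'\subset K\subset\mathbb{R}^n$, $\delta>0$, $\sigma>0$, and let $\nu_1,\dots,\nu_M\in K'$ be a maximal $\delta$-packing of $K'$ (i.e. $\|\nu_i-\nu_j\|\ge\delta$ for $i\ne j$ and no further point of $K'$ can be added). Suppose $\mu\in K'$ and $Y=\mu+\xi$ with $\xi\sim N(0,\sigma^2\mathbb{I}_n)$, and let $i^*\in\arg\min_i\|Y-\nu_i\|$. Then for any fixed $C>2$, $$\mathbb{P}(\|\nu_{i^*}-\mu\|>(C+1)\delta)\le M\exp\big(-(C-2)^2\delta^2/(8\sigma^2)\big).$$
   Context: $\|\cdot\|$ is the Euclidean norm. *)

(* Defs.v *)
From HB Require Import structures.
From mathcomp Require Import all_boot all_order all_algebra.
From mathcomp Require Import all_classical all_reals all_analysis.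
Set Implicit Arguments. Unset Strict Implicit. Unset Printing Implicit Defensive.
Import Order.TTheory GRing.Theory Num.Theory.
Local Open Scope classical_set_scope.
Local Open Scope ring_scope.

(* Euclidean norm on R^n, represented as row vectors 'rV[R]_n.
   (The library's `|v| on matrices is the sup norm, so we define it.) *)
Definition enorm {R : realType} {n : nat} (v : 'rV[R]_n) : R :=
  Num.sqrt (\sum_(i < n) v ord0 i ^+ 2).

Definition is_packing {R : realType} {n M : nat} (K' : set 'rV[R]_n)
  (delta : R) (nu : 'I_M -> 'rV[R]_n) : Prop :=
  (forall i, K' (nu i)) /\
  (forall i j, i != j -> delta <= enorm (nu i - nu j)).

Definition is_maximal_packing {R : realType} {n M : nat} (K' : set 'rV[R]_n)
  (delta : R) (nu : 'I_M -> 'rV[R]_n) : Prop :=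
  is_packing K' delta nu /\
  (forall x, K' x -> exists i, enorm (x - nu i) < delta).

(* xi : T -> R^n has law N(0, sigma^2 I_n): its coordinates are measurable
   and jointly distributed as independent N(0, sigma^2) variables, i.e. the
   law of xi agrees with the product Gaussian measure on all measurable
   rectangles (which determines the law). *)
Definition is_std_gaussian_vector {R : realType} {d : measure_display}
  {T : measurableType d} (P : probability T R) (n : nat) (sigma : R)
  (xi : T -> 'rV[R]_n) : Prop :=
  (forall i : 'I_n, measurable_fun setT (fun w => xi w ord0 i)) /\
  (forall B : 'I_n -> set R, (forall i, measurable (B i)) ->
     P [set w | forall i, B i (xi w ord0 i)] =
     (\prod_(i < n) normal_prob 0 sigma (B i))%E).

(* Main.v *)
Require Import Defs.
From HB Require Import structures.
From mathcomp Require Import all_boot all_order all_algebra.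
From mathcomp Require Import all_classical all_reals all_analysis.
From mathcomp Require Import measurable_realfun ring lra.
Import Order.TTheory GRing.Theory Num.Theory.
Local Open Scope classical_set_scope.
Local Open Scope ring_scope.

Module P1.
Local Set Implicit Arguments. Local Unset Strict Implicit.
Local Open Scope classical_set_scope.
Local Open Scope ring_scope.
Section transfer.
Local Open Scope ereal_scope.
Context {R : realType} d (T : measurableType d) d' (U : measurableType d').
Variables (mu : {measure set T -> \bar R}) (nu : {measure set U -> \bar R}).
Variables (X : T -> U) (G : T -> R) (c : \bar R).
Hypotheses (mX : measurable_fun setT X) (mG : measurable_fun setT G)
  (G0 : forall w, (0 <= G w)%R) (cfin : c \is a fin_num) (c0 : 0 <= c).
Hypothesis hyp : forall B, measurable B ->
  \int[mu]_w (\1_B (X w) * G w)%:E = c * nu B.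

Import HBNNSimple.

Lemma transfer_nnsfun (f : {nnsfun U >-> R}) :
  \int[mu]_w (f (X w) * G w)%:E = c * \int[nu]_x (f x)%:E.
Proof.
rewrite integral_nnsfun// patch_setT sintegralE.
transitivity (\int[mu]_w (\sum_(y \in range f) (y * (\1_(f @^-1` [set y]) (X w) * G w))%:E)).
  apply: eq_integral => w _.
  rewrite fsumEFin // fimfunE; congr EFin.
  rewrite fsbig_finite //= fsbig_finite //= big_distrl /=.
  by apply: eq_bigr => y _; rewrite mulrA.
rewrite ge0_integral_fsum //; last first.
  move=> y w _; rewrite mulrA lee_fin mulr_ge0 //.
  by rewrite -lee_fin EFinM nnfun_muleindic_ge0.
  move=> y; apply/measurable_EFinP; apply: measurable_funM => //.
  apply: measurable_funM => //; apply: measurableT_comp => //.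
rewrite ge0_mule_fsumr; last by move=> y; exact: nnsfun_mulemu_ge0.
apply: eq_fsbigr => y yf.
have y0 : (0 <= y)%R.
  move: yf; rewrite inE => -[t _ ft]; rewrite -ft; exact: fun_ge0.
under eq_integral do rewrite mulrA -mulrA EFinM.
rewrite ge0_integralZl_EFin //.
- rewrite hyp; last exact: measurable_sfunP.
  by rewrite muleCA.
- move=> w _; rewrite lee_fin; apply: mulr_ge0 => //.
- apply/measurable_EFinP; apply: measurable_funM => //.
  by apply: measurableT_comp => //; apply: measurable_indic; exact: measurable_sfunP.
Qed.


Lemma transfer (g : U -> R) : measurable_fun setT g -> (forall x, (0 <= g x)%R) ->
  \int[mu]_w (g (X w) * G w)%:E = c * \int[nu]_x (g x)%:E.
Proof.
move=> mg g0.
have mg' : measurable_fun setT (EFin \o g) by exact/measurable_EFinP.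
have g0' : forall x, setT x -> 0 <= (EFin \o g) x by move=> x _; rewrite lee_fin.
pose h := nnsfun_approx measurableT mg'.
have hcvg x : (fun n => (h n x)%:E) @ \oo --> (g x)%:E.
  exact: (@cvg_nnsfun_approx _ _ _ _ measurableT _ mg' g0' x I).
have nd x : {homo (fun n => h n x) : a b / (a <= b)%N >-> (a <= b)%R}.
  by move=> a b ab; exact/lefP/nd_nnsfun_approx.
transitivity (\int[mu]_w limn (fun n => (h n (X w) * G w)%:E)).
  apply: eq_integral => w _; apply/esym/cvg_lim => //.
  rewrite EFinM; under eq_fun do rewrite EFinM.
  by apply: cvgeZr => //; exact: hcvg.
rewrite monotone_convergence //; last 3 first.
- move=> n; apply/measurable_EFinP; apply: measurable_funM => //.
  exact: measurableT_comp.
- by move=> n w _; rewrite lee_fin mulr_ge0.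
- move=> w _ a b ab; rewrite lee_fin ler_wpM2r //; exact: nd.
transitivity (c * limn (fun n => \int[nu]_x (h n x)%:E)); last first.
  congr (_ * _); rewrite -monotone_convergence //.
  - apply: eq_integral => x _; apply: cvg_lim => //; exact: hcvg.
  - by move=> n; apply/measurable_EFinP.
  - by move=> n x _; rewrite lee_fin.
  - by move=> x _ a b ab; rewrite lee_fin; exact: nd.
rewrite -limeMl //; last first.
  apply: ereal_nondecreasing_is_cvgn => a b ab; apply: ge0_le_integral => //.
  - by move=> x _; rewrite lee_fin.
  - by apply/measurable_EFinP.
  - by apply/measurable_EFinP.
  - by move=> x _; rewrite lee_fin; exact: nd.
suff -> : (fun n => \int[mu]_x (h n (X x) * G x)%:E) =
  (fun n => c * \int[nu]_x (h n x)%:E) by [].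
apply/funext => n; exact: transfer_nnsfun.
Qed.

End transfer.

Lemma alg1 {R : realType} (t a x : R) : t != 0 ->
  a * x + - (x - 0) ^+ 2 / (t * 2) = a ^+ 2 * t / 2 + - (x - a * t) ^+ 2 / (t * 2).
Proof.
move=> t0.
have t2 : t * 2 != 0 by rewrite mulf_neq0 // pnatr_eq0.
apply: (mulIf t2).
rewrite !mulrDl !mulNr !divfK //.
have -> : a ^+ 2 * t / 2 * (t * 2) = a ^+ 2 * t * t.
  by rewrite (mulrC t 2) mulrA divfK ?pnatr_eq0.
rewrite subr0 !expr2 !mulrBl !mulrBr.
ring.
Qed.

Lemma expR_shift {R : realType} (s a x : R) : s != 0 ->
  expR (a * x) * normal_fun 0 s x = expR (a ^+ 2 * s ^+ 2 / 2) * normal_fun (a * s ^+ 2) s x.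
Proof.
move=> s0; rewrite /normal_fun -!expRD; congr expR.
by rewrite -[s ^+ 2 *+ 2]mulr_natr; apply: alg1; rewrite sqrf_eq0.
Qed.

Section normal_facts.
Local Open Scope ereal_scope.
Context {R : realType}.

Lemma normal_integralE (s : R) (g : R -> R) : measurable_fun setT g ->
  (forall x, (0 <= g x)%R) ->
  \int[normal_prob 0 s]_x (g x)%:E =
  \int[lebesgue_measure]_x (g x * normal_pdf 0 s x)%:E.
Proof.
move=> mg g0.
have H : forall B, measurable B ->
    \int[lebesgue_measure]_w (\1_B w * normal_pdf 0 s w)%:E = 1 * normal_prob 0 s B.
  move=> B mB; rewrite mul1e /normal_prob [RHS]integral_mkcond epatch_indic.
  by apply: eq_integral => x _; rewrite /= EFinM muleC.
rewrite (@transfer R _ _ _ _ lebesgue_measure (normal_prob 0 s) id (normal_pdf 0 s) 1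
  _ _ _ _ H g mg g0) ?mul1e //.
- exact: measurable_normal_pdf.
- exact: normal_pdf_ge0.
Qed.

Lemma normal_mgf (s a : R) : s != 0%R ->
  \int[normal_prob 0 s]_x (expR (a * x))%:E = (expR (a ^+ 2 * s ^+ 2 / 2))%:E.
Proof.
move=> s0; rewrite normal_integralE //; last first.
  apply: measurableT_comp; first exact: measurable_expR.
  exact: measurable_funM.
transitivity (\int[lebesgue_measure]_x ((expR (a ^+ 2 * s ^+ 2 / 2))%:E *
   (normal_pdf (a * s ^+ 2) s x)%:E)).
  apply: eq_integral => x _; rewrite -EFinM; congr EFin.
  rewrite !normal_pdfE //= mulrCA expR_shift // mulrCA //.
rewrite ge0_integralZl_EFin //.
- by rewrite integral_normal_pdf mule1.
- by move=> x _; rewrite lee_fin normal_pdf_ge0.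
- by apply/measurable_EFinP; exact: measurable_normal_pdf.
Qed.

End normal_facts.

End P1.
Import P1.

Module P3.
Local Set Implicit Arguments. Local Unset Strict Implicit.
Local Open Scope classical_set_scope.
Local Open Scope ring_scope.
Definition hk {R : realType} {n : nat} (g : 'I_n -> R -> R) (k : nat) (B : 'I_n -> set R)
  (i : 'I_n) : R -> R := if (i < k)%N then g i else \1_(B i).

Section indep.
Local Open Scope ereal_scope.
Context {R : realType} d (T : measurableType d) (P : probability T R) (n : nat)
  (s : R) (xi : T -> 'rV[R]_n).
Hypothesis hxi : is_std_gaussian_vector P s xi.
Local Notation N := (normal_prob 0 s).
Local Notation X i w := (xi w ord0 i).

Lemma mX i : measurable_fun setT (fun w => X i w).
Proof. exact: hxi.1. Qed.

Lemma prod_indic (B : 'I_n -> set R) w :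
  (\prod_i (\1_(B i) (X i w) : R) = (\1_[set w | forall i, B i (X i w)] w : R))%R.
Proof.
case: (pselect (forall i, B i (X i w))) => [h|h].
  rewrite [RHS]indicE mem_set //; apply: big1 => i _.
  by rewrite indicE mem_set.
have [i Hi] : exists i, ~ B i (X i w) by apply/existsNP.
by rewrite [RHS]indicE memNset // (bigD1 i) //= indicE memNset // mul0r.
Qed.

Lemma rect_meas (B : 'I_n -> set R) : (forall i, measurable (B i)) ->
  measurable [set w | forall i, B i (X i w)].
Proof.
move=> mB.
have -> : [set w | forall i, B i (X i w)] = \bigcap_(i in setT) ((fun w => X i w) @^-1` B i).
  apply/seteqP; split => w /=; first by move=> h i _; exact: h.
  by move=> h i; exact: h.
apply: fin_bigcap_measurable => // i _.
by have := mX i measurableT (mB i); rewrite setTI.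
Qed.

Variables (g : 'I_n -> R -> R).
Hypotheses (mg : forall i, measurable_fun setT (g i)) (g0 : forall i x, (0 <= g i x)%R)
  (gfin : forall i, \int[N]_x (g i x)%:E < +oo).

Lemma hk_ge0 k B i x : (0 <= hk g k B i x)%R.
Proof. by rewrite /hk; case: ifP => _ //; exact: indic_ge0. Qed.

Lemma hk_meas k B i : measurable (B i) -> measurable_fun setT (hk g k B i).
Proof. by move=> mB; rewrite /hk; case: ifP => _ //; exact: measurable_indic. Qed.

Lemma hk_fin k B i : measurable (B i) -> \int[N]_x (hk g k B i x)%:E \is a fin_num.
Proof.
move=> mB; rewrite /hk; case: ifP => _.
  by rewrite ge0_fin_numE ?gfin // integral_ge0 // => x _; rewrite lee_fin.
by rewrite integral_indic // setIT fin_num_measure.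
Qed.

Lemma indep_stage k : (k <= n)%N -> forall B : 'I_n -> set R,
  (forall i, measurable (B i)) ->
  \int[P]_w (\prod_i hk g k B i (X i w))%:E = \prod_i \int[N]_x (hk g k B i x)%:E.
Proof.
elim: k => [|k IH] kn B mB.
  transitivity (\int[P]_w (\1_[set w | forall i, B i (X i w)] w)%:E).
    by apply: eq_integral => w _; congr EFin; rewrite -prod_indic.
  rewrite integral_indic //; last exact: rect_meas.
  have E0 : forall A : set T, A `&` [set: T] = A by move=> A; exact: setIT.
  rewrite E0; transitivity (\prod_i normal_prob 0 s (B i)); first exact: (hxi.2 B mB).
  apply: eq_bigr => i _; rewrite /hk ltn0 integral_indic; [| exact: measurableT | exact: mB].
  by congr (_ _); apply/esym; exact: setIT.
have kn' : (k < n)%N by [].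
pose kk := Ordinal kn'.
have hkE B' i : i != kk ->
    hk g k (fun j => if j == kk then B' else B j) i = hk g k.+1 B i.
  move=> ik; rewrite /hk (negbTE ik).
  have ik' : (i : nat) != k.
    by move: ik; apply: contra => /eqP h; apply/eqP/val_inj.
  by rewrite [in RHS]ltnS [in RHS]leq_eqVlt (negbTE ik').
transitivity (\int[P]_w (g kk (X kk w) *
    \prod_(i | i != kk) hk g k.+1 B i (X i w))%:E).
  by apply: eq_integral => w _; rewrite (bigD1 kk) //= /hk ltnSn.
have hkk : hk g k.+1 B kk = g kk by rewrite /hk /= ltnSn.
rewrite (bigD1 kk) //= hkk muleC.
rewrite (@transfer R _ T _ _ P N (fun w => X kk w) _
   (\prod_(i | i != kk) \int[N]_x (hk g k.+1 B i x)%:E)) //.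
- exact: mX.
- under eq_fun do rewrite big_mkcond.
  apply: measurable_prod => i _; case: (i != kk) => //.
  by apply: measurableT_comp; [exact: hk_meas | exact: mX].
- by move=> w; apply: prodr_ge0 => i _; exact: hk_ge0.
- by apply: prode_fin_num => i _; exact: hk_fin.
- move=> B' mB'.
  have mB'' : forall i, measurable ((fun j => if j == kk then B' else B j) i).
    by move=> i /=; case: (i == kk); [exact: mB' | exact: mB].
  transitivity (\int[P]_w (\prod_i hk g k (fun j => if j == kk then B' else B j) i (X i w))%:E).
    apply: eq_integral => w _; congr EFin; rewrite [RHS](bigD1 kk) //=.
    apply: congr2; first by rewrite /hk /= ltnn eqxx.
    by apply: eq_bigr => i ik; rewrite hkE.
  rewrite IH ?(ltnW kn) // (bigD1 kk) //= muleC; apply: congr2.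
    by apply: eq_bigr => i ik; rewrite hkE.
  rewrite /hk /= ltnn eqxx integral_indic; [| exact: measurableT | exact: mB'].
  by congr (_ _); exact: setIT.
- exact: mg.
Qed.

Lemma indep_prod :
  \int[P]_w (\prod_i g i (X i w))%:E = \prod_i \int[N]_x (g i x)%:E.
Proof.
have := @indep_stage n (leqnn n) (fun _ => setT) (fun _ => measurableT).
rewrite /hk; under eq_integral do under eq_bigr do rewrite ltn_ord.
by under eq_bigr do rewrite ltn_ord.
Qed.

End indep.

End P3.
Import P3.

Module P4.
Local Set Implicit Arguments. Local Unset Strict Implicit.
Local Open Scope classical_set_scope.
Local Open Scope ring_scope.
Lemma alg2 {R : realType} (t s S : R) : s != 0 -> S != 0 ->
  - (t / (s ^+ 2 * S)) * t + (t / (s ^+ 2 * S)) ^+ 2 * s ^+ 2 / 2 * S =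
  - t ^+ 2 / (2 * (s ^+ 2 * S)).
Proof. by move=> s0 S0; field; rewrite S0 s0. Qed.

Section chernoff.
Local Open Scope ereal_scope.
Context {R : realType} d (T : measurableType d) (P : probability T R) (n : nat)
  (s : R) (xi : T -> 'rV[R]_n).
Hypothesis hxi : is_std_gaussian_vector P s xi.
Hypothesis s0 : s != 0%R.
Local Notation X i w := (xi w ord0 i).

Lemma meas_lin (v : 'I_n -> R) : measurable_fun setT (fun w => \sum_i v i * X i w)%R.
Proof.
apply: measurable_sum => i; apply: measurable_funM => //; exact: (mX hxi).
Qed.

Lemma chernoff (v : 'I_n -> R) (t : R) : (0 < \sum_i v i ^+ 2)%R -> (0 <= t)%R ->
  P [set w | (t <= \sum_i v i * X i w)%R] <=
  (expR (- t ^+ 2 / (2 * (s ^+ 2 * \sum_i v i ^+ 2))))%:E.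
Proof.
move=> S0 t0.
set S := (\sum_i v i ^+ 2)%R.
have u0 : (0 < s ^+ 2 * S)%R by rewrite mulr_gt0 // exprn_even_gt0.
set lam := (t / (s ^+ 2 * S))%R.
have lam0 : (0 <= lam)%R by rewrite divr_ge0 // ltW.
set A := [set w | (t <= \sum_i v i * X i w)%R].
have mA : measurable A.
  rewrite (_ : A = (fun w => \sum_i v i * X i w)%R @^-1` `[t, +oo[); last first.
    by apply/seteqP; split => w /=; rewrite in_itv /= andbT.
  by have := meas_lin v measurableT (measurable_itv `[t, +oo[); rewrite setTI.
have -> : P A = \int[P]_w (\1_A w)%:E by rewrite integral_indic // setIT.
apply: (@le_trans _ _ (\int[P]_w ((expR (- lam * t)) *
   \prod_i expR (lam * v i * X i w))%:E)).
  apply: ge0_le_integral => //.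
  - by apply/measurable_EFinP; exact: measurable_indic.
  - apply/measurable_EFinP; apply: measurable_funM => //.
    apply: measurable_prod => i _; apply: (measurableT_comp (@measurable_expR R)).
    by apply: measurable_funM => //; exact: (mX hxi).
  - move=> w _; rewrite lee_fin -expR_sum -expRD indicE.
    case: (boolP (w \in A)) => wA /=; last exact: expR_ge0.
    rewrite -expR0 ler_expR.
    have -> : (\sum_i lam * v i * X i w = lam * \sum_i v i * X i w)%R.
      by rewrite mulr_sumr; apply: eq_bigr => i _; rewrite mulrA.
    rewrite mulNr addrC -mulrBr; apply: mulr_ge0 => //.
    by rewrite subr_ge0; move: wA; rewrite inE.
under eq_integral do rewrite EFinM.
rewrite ge0_integralZl_EFin //; last 2 first.
  - by move=> w _; rewrite lee_fin; apply: prodr_ge0 => i _; exact: expR_ge0.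
  - apply/measurable_EFinP; apply: measurable_prod => i _.
    apply: (measurableT_comp (@measurable_expR R)).
    by apply: measurable_funM => //; exact: (mX hxi).
rewrite (@indep_prod R d T P n s xi hxi (fun i x => expR (lam * v i * x)%R)); last 3 first.
- move=> i; apply: (measurableT_comp (@measurable_expR R)).
  exact: measurable_funM.
- by move=> i x; exact: expR_ge0.
- by move=> i; rewrite normal_mgf // ltry.
under eq_bigr do rewrite normal_mgf //.
rewrite prodEFin -EFinM lee_fin -expR_sum -expRD ler_expR.
have -> : (\sum_i (lam * v i) ^+ 2 * s ^+ 2 / 2 = lam ^+ 2 * s ^+ 2 / 2 * S)%R.
  by rewrite /S mulr_sumr; apply: eq_bigr => i _; ring.
by rewrite /lam alg2 // gt_eqF.
Qed.
End chernoff.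

End P4.
Import P4.

Module P5.
Local Set Implicit Arguments. Local Unset Strict Implicit.
Local Open Scope classical_set_scope.
Local Open Scope ring_scope.
Section alg.
Context {R : realType} {n : nat}.
Implicit Types (p q x : 'rV[R]_n).

Definition sq p := \sum_k p ord0 k ^+ 2.
Definition ip p q := \sum_k p ord0 k * q ord0 k.

Lemma sq_ge0 p : 0 <= sq p.
Proof. by apply: sumr_ge0 => k _; exact: sqr_ge0. Qed.

Lemma enormE p : enorm p = Num.sqrt (sq p).
Proof. by []. Qed.

Lemma enorm_sq p : enorm p ^+ 2 = sq p.
Proof. by rewrite enormE sqr_sqrtr // sq_ge0. Qed.

Lemma sqN p : sq (- p) = sq p.
Proof. by apply: eq_bigr => k _; rewrite mxE sqrrN. Qed.

Lemma sqD p q : sq (p + q) = sq p + 2 * ip p q + sq q.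
Proof.
rewrite /sq /ip mulr_sumr -!big_split /=; apply: eq_bigr => k _.
by rewrite mxE; ring.
Qed.

Lemma ipNr p q : ip p (- q) = - ip p q.
Proof. by rewrite /ip -sumrN; apply: eq_bigr => k _; rewrite mxE mulrN. Qed.

Lemma sqB p q : sq (p - q) = sq p - 2 * ip p q + sq q.
Proof. by rewrite sqD ipNr sqN mulrN. Qed.

Lemma ipBl p q x : ip (p - q) x = ip p x - ip q x.
Proof. by rewrite /ip -sumrB; apply: eq_bigr => k _; rewrite !mxE mulrBl. Qed.

Lemma cauchy_schwarz p q : ip p q ^+ 2 <= sq p * sq q.
Proof.
pose a k := p ord0 k; pose b k := q ord0 k.
have H : 0 <= \sum_i \sum_j (a i * b j - a j * b i) ^+ 2.
  by apply: sumr_ge0 => i _; apply: sumr_ge0 => j _; exact: sqr_ge0.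
have e1 : \sum_i \sum_j a i ^+ 2 * b j ^+ 2 = sq p * sq q.
  by rewrite /sq mulr_suml; apply: eq_bigr => i _; rewrite mulr_sumr.
have e2 : \sum_i \sum_j a j ^+ 2 * b i ^+ 2 = sq p * sq q.
  rewrite /sq mulrC mulr_suml; apply: eq_bigr => i _; rewrite mulr_sumr.
  by apply: eq_bigr => j _; rewrite mulrC.
have e3 : \sum_i \sum_j (a i * b i) * (a j * b j) = ip p q ^+ 2.
  by rewrite /ip expr2 mulr_suml; apply: eq_bigr => i _; rewrite mulr_sumr.
have E : \sum_i \sum_j (a i * b j - a j * b i) ^+ 2 =
    2 * (sq p * sq q - ip p q ^+ 2).
  have -> : 2 * (sq p * sq q - ip p q ^+ 2) =
    sq p * sq q + sq p * sq q - 2 * ip p q ^+ 2 by ring.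
  rewrite -{1}e1 -e2 -e3 -big_split /= mulr_sumr -sumrB; apply: eq_bigr => i _.
  rewrite -big_split /= mulr_sumr -sumrB; apply: eq_bigr => j _; ring.
by move: H; rewrite E pmulr_rge0 // subr_ge0.
Qed.


Lemma ip_lb p q : - (Num.sqrt (sq p) * Num.sqrt (sq q)) <= ip p q.
Proof.
have h := cauchy_schwarz p q.
have e : sq p * sq q = (Num.sqrt (sq p) * Num.sqrt (sq q)) ^+ 2.
  by rewrite exprMn !sqr_sqrtr // sq_ge0.
rewrite e in h.
have m0 : 0 <= Num.sqrt (sq p) * Num.sqrt (sq q) by rewrite mulr_ge0 // sqrtr_ge0.
move: h m0; set m := Num.sqrt (sq p) * Num.sqrt (sq q); set c := ip p q => h m0.
nra.
Qed.

Lemma S_bound p0 q : sq (p0 - q) <= (Num.sqrt (sq q) + Num.sqrt (sq p0)) ^+ 2.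
Proof.
have h := ip_lb p0 q.
rewrite sqB sqrrD !sqr_sqrtr ?sq_ge0 //.
move: h; set c := ip p0 q; set A := Num.sqrt (sq q); set B := Num.sqrt (sq p0).
move=> h; lra.
Qed.

End alg.

Lemma key_ineq {R : realType} (A B S C dl : R) : 0 < dl -> 2 < C -> (C + 1) * dl < A ->
  0 <= B -> B < dl -> 0 <= S -> S <= (A + B) ^+ 2 ->
  (C - 2) ^+ 2 * dl ^+ 2 * S <= (A ^+ 2 - B ^+ 2) ^+ 2.
Proof.
move=> d0 C2 hA B0 Bd S0 SAB.
have h1 : (C - 2) * dl <= A - B by nra.
have h0 : 0 <= (C - 2) * dl by rewrite mulr_ge0 // ?subr_ge0 ltW.
have -> : (A ^+ 2 - B ^+ 2) ^+ 2 = (A - B) ^+ 2 * (A + B) ^+ 2 by ring.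
rewrite -exprMn; apply: ler_pM => //.
- by rewrite exprn_even_ge0.
- by rewrite lerXn2r // ?nnegrE // (le_trans h0).
Qed.


Lemma exp_cmp {R : realType} (t S C dl sg : R) : 0 < sg -> 0 < S ->
  (C - 2) ^+ 2 * dl ^+ 2 * S <= 4 * t ^+ 2 ->
  expR (- t ^+ 2 / (2 * (sg ^+ 2 * S))) <= expR (- ((C - 2) ^+ 2 * dl ^+ 2) / (8 * sg ^+ 2)).
Proof.
move=> sg0 S0 h; rewrite ler_expR !mulNr lerN2.
have sg0' : sg != 0 by rewrite gt_eqF.
have S0' : S != 0 by rewrite gt_eqF.
have e1 : (C - 2) ^+ 2 * dl ^+ 2 / (8 * sg ^+ 2) =
    ((C - 2) ^+ 2 * dl ^+ 2 * S) / (8 * (sg ^+ 2 * S)).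
  by field; rewrite S0' sg0'.
have e2 : t ^+ 2 / (2 * (sg ^+ 2 * S)) = (4 * t ^+ 2) / (8 * (sg ^+ 2 * S)).
  by field; rewrite S0' sg0'.
rewrite e1 e2 ler_pM2r // invr_gt0 mulr_gt0 // mulr_gt0 //.
by rewrite exprn_even_gt0.
Qed.

End P5.
Import P5.

Module P6.
Local Open Scope classical_set_scope.
Local Open Scope ring_scope.
Section union.
Local Open Scope ereal_scope.
Context {R : realType} d (T : measurableType d) (P : probability T R) (I : eqType)
  (A : I -> set T).

Lemma bigU_le (r : seq I) : (forall i, measurable (A i)) ->
  P (\big[setU/set0]_(i <- r) A i) <= \sum_(i <- r) P (A i).
Proof.
move=> mA; elim: r => [|i r IH]; first by rewrite !big_nil measure0.
rewrite !big_cons; apply: le_trans (measureU2 _ _ _) _ => //.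
- exact: bigsetU_measurable.
- exact: leeD2l.
Qed.

Lemma bigU_mem (r : seq I) i w : i \in r -> A i w ->
  (\big[setU/set0]_(j <- r) A j) w.
Proof.
elim: r => [//|j r IH]; rewrite inE big_cons => /orP[/eqP <- h|/IH h /h]; first by left.
by right.
Qed.
End union.

Lemma meas_sq {R : realType} d (T : measurableType d) n (xi : T -> 'rV[R]_n)
  (mxi : forall k, measurable_fun setT (fun w => xi w ord0 k)) (mu c : 'rV[R]_n) :
  measurable_fun setT (fun w => sq (mu + xi w - c)).
Proof.
rewrite /sq; under eq_fun do under eq_bigr do rewrite !mxE.
apply: measurable_sum => k; apply: measurable_funX; apply: measurable_funB => //.
by apply: measurable_funD => //; exact: mxi.
Qed.


End P6.
Import P6.

Theorem mainTheorem6 (R : realType) (n M : nat)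
  (K K' : set 'rV[R]_n) (delta sigma C : R)
  (nu : 'I_M -> 'rV[R]_n) (mu : 'rV[R]_n)
  (d : measure_display) (T : measurableType d) (P : probability T R)
  (xi : T -> 'rV[R]_n) :
  K' `<=` K ->
  0 < delta -> 0 < sigma -> 2 < C ->
  is_maximal_packing K' delta nu ->
  K' mu ->
  is_std_gaussian_vector P sigma xi ->
  let Y := fun w => mu + xi w in
  let E := [set w | exists istar : 'I_M,
        (forall j, enorm (Y w - nu istar) <= enorm (Y w - nu j)) /\
        (C + 1) * delta < enorm (nu istar - mu)] in
  (P E <= (M%:R * expR (- ((C - 2) ^+ 2 * delta ^+ 2) / (8 * sigma ^+ 2)))%:E)%E.
Proof.
move=> KK d0 s0 C2 [[packK packD] maxP] Kmu hxi /=.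
set E := [set w | exists istar : 'I_M, _].
have [i0 hi0] := maxP mu Kmu.
have s0' : sigma != 0 by rewrite gt_eqF.
pose far (i : 'I_M) := ((C + 1) * delta < enorm (nu i - mu)).
pose v (i : 'I_M) (k : 'I_n) := (nu i - nu i0) ord0 k.
pose t (i : 'I_M) := ((sq (mu - nu i) - sq (mu - nu i0)) / 2).
pose A (i : 'I_M) := if far i then [set w | t i <= \sum_k v i k * xi w ord0 k] else set0.
pose b := expR (- ((C - 2) ^+ 2 * delta ^+ 2) / (8 * sigma ^+ 2)).
have mA : forall i, measurable (A i).
  move=> i; rewrite /A; case: ifP => _ //.
  rewrite (_ : [set w | _] = (fun w => \sum_k v i k * xi w ord0 k) @^-1` `[t i, +oo[); last first.
    by apply/seteqP; split => w /=; rewrite in_itv /= andbT.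
  by have := meas_lin hxi (v i) measurableT (measurable_itv `[t i, +oo[); rewrite setTI.
have mE : measurable E.
  have -> : E = \bigcup_(i in [set i | far i]) \bigcap_(j in setT)
      [set w | sq (mu + xi w - nu i) <= sq (mu + xi w - nu j)].
    apply/seteqP; split => w /=.
    - move=> [i [h1 h2]]; exists i => // j _ /=.
      by rewrite -ler_sqrt ?sq_ge0 //; exact: h1 j.
    - move=> [i hi h]; exists i; split => // j; have := h j I.
      by rewrite /= -ler_sqrt ?sq_ge0.
  apply: fin_bigcup_measurable; first exact: finite_finset.
  move=> i _; apply: fin_bigcap_measurable; first exact: finite_finset.
  move=> j _.
  rewrite (_ : [set w | _] = (fun w => sq (mu + xi w - nu j) - sq (mu + xi w - nu i))
     @^-1` `[0, +oo[); last first.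
    by apply/seteqP; split => w /=; rewrite in_itv /= andbT subr_ge0.
  have mf : measurable_fun setT
      (fun w => sq (mu + xi w - nu j) - sq (mu + xi w - nu i)).
    by apply: measurable_funB; apply: meas_sq; exact: hxi.1.
  by have := mf measurableT _ (measurable_itv `[0, +oo[); rewrite setTI.
have EU : E `<=` \big[setU/set0]_(i <- index_enum 'I_M) A i.
  move=> w [i [hmin hfar]].
  apply: (@bigU_mem d T _ A _ i); first by rewrite mem_index_enum.
  rewrite /A (_ : far i = true) //=.
  have h := hmin i0; rewrite !enormE ler_sqrt ?sq_ge0 // in h.
  have e q : mu + xi w - q = (mu - q) + xi w by rewrite addrAC.
  rewrite !e (sqD (mu - nu i)) (sqD (mu - nu i0)) in h.
  have ev : \sum_k v i k * xi w ord0 k = ip (mu - nu i0) (xi w) - ip (mu - nu i) (xi w).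
    rewrite -ipBl; apply: eq_bigr => k _; congr (_ * _); rewrite /v !mxE; ring.
  rewrite ev /t; lra.
apply: (@le_trans _ _ (P (\big[setU/set0]_(i <- index_enum 'I_M) A i))).
  by apply: le_measure => //; rewrite inE //; exact: bigsetU_measurable.
apply: (le_trans (@bigU_le R d T P _ A _ mA)).
apply: (@le_trans _ _ (\sum_(i <- index_enum 'I_M) b%:E)).
  apply: lee_sum => i _.
  rewrite /A; case: ifP => hf; last by rewrite measure0 lee_fin expR_ge0.
  have hq : enorm (nu i - mu) = Num.sqrt (sq (mu - nu i)) by rewrite enormE -sqN opprB.
  have hfar : (C + 1) * delta < Num.sqrt (sq (mu - nu i)) by rewrite -hq; exact: hf.
  have hB : Num.sqrt (sq (mu - nu i0)) < delta by exact: hi0.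
  have hB0 : 0 <= Num.sqrt (sq (mu - nu i0)) by exact: sqrtr_ge0.
  have dC : delta < (C + 1) * delta by nra.
  have ii0 : i != i0.
    by apply/negP => /eqP ei; rewrite ei in hfar; lra.
  have hS : delta ^+ 2 <= sq (nu i - nu i0).
    rewrite -[sq (nu i - nu i0)]sqr_sqrtr ?sq_ge0 // lerXn2r // ?nnegrE ?sqrtr_ge0 ?(ltW d0) //.
    exact: (packD i i0 ii0).
  have S0 : 0 < \sum_k v i k ^+ 2.
    by apply: lt_le_trans hS; rewrite exprn_gt0.
  have t0 : 0 <= t i.
    rewrite /t -[sq (mu - nu i)]sqr_sqrtr ?sq_ge0 // -[sq (mu - nu i0)]sqr_sqrtr ?sq_ge0 //.
    nra.
  apply: le_trans (@chernoff R d T P n sigma xi hxi s0' (v i) (t i) S0 t0) _.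
  rewrite lee_fin /b; apply: exp_cmp => //.
  have e4 : 4 * t i ^+ 2 = (Num.sqrt (sq (mu - nu i)) ^+ 2 - Num.sqrt (sq (mu - nu i0)) ^+ 2) ^+ 2.
    by rewrite /t !sqr_sqrtr ?sq_ge0 //; field.
  rewrite e4; apply: key_ineq => //.
  - exact: sq_ge0.
  - have -> : \sum_k v i k ^+ 2 = sq ((mu - nu i0) - (mu - nu i)).
      by apply: eq_bigr => k _; rewrite /v !mxE; congr (_ ^+ 2); ring.
    exact: S_bound.
rewrite sumEFin lee_fin.
have -> : \sum_(i <- index_enum 'I_M) b = \sum_(i < M) b by [].
by rewrite sumr_const card_ord mulr_natl.
Qed.
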